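(* Let $D\subset\mathbb{C}^n$ be a bounded $\alpha$-regular domain, $E\subset D$, and $\psi$ a bounded function on $E$ with $\sup_E\psi<0$. Then for all $z\in D$, \[ -\inf_{w\in E}\psi(w)\,\omega^*_\alpha(z,E,D)\le\omega^*_\alpha(z,E,D,\psi)\le-\sup_{w\in E}\psi(w)\,\omega^*_\alpha(z,E,D). \]
   Context: Fix a closed, strictly positive differential form $\alpha$ of bidegree $(n-1,n-1)$ with $C^1$ coefficients on an open subset of $\mathbb{C}^n$ containing all sets considered. Let $d=\partial+\bar\partial$, $d^c=(\bar\partial-\partial)/(4i)$. For an open set $\Omega$, $u\in L^1_{loc}(\Omega)$ is $\alpha$-subharmonic ($u\in\alpha\text{-}sh(\Omega)$) if it is strongly upper semicontinuous (upper semicontinuous, and for every $z^0\in\Omega$ and every set $A$ of full Lebesgue measure near $z^0$, $\limsup_{z\to z^0,z\in A}u(z)=u(z^0)$) and $\int u\,\alpha\wedge dd^c\omega\ge0$ for every nonnegative test function $\omega$; $u\equiv-\infty$ is also allowed. A bounded domain $D$ is $\alpha$-regular if there is $\rho\in\alpha\text{-}sh(D)$ with $\rho<0$ on $D$ and $\rho\to0$ at $\partial D$. $\mathcal U(E,D,\psi)$ is the class of $u\in\alpha\text{-}sh(D)$ with $u<0$ on $D$ and $u\le\psi$ on $E$; $\omega_\alpha(z,E,D,\psi)=\sup\{u(z):u\in\mathcal U(E,D,\psi)\}$ and $\omega^*_\alpha(z,E,D,\psi)=\limsup_{w\to z}\omega_\alpha(w,E,D,\psi)$. The unweighted $\alpha$-subharmonic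 measure is $\omega^*_\alpha(z,E,D):=\omega^*_\alpha(z,E,D,-1)$ (i.e. with $\psi\equiv-1$). *)

(* Defs.v *)
From HB Require Import structures.
From mathcomp Require Import all_boot all_order all_algebra.
From mathcomp Require Import all_classical all_reals all_analysis measurable_realfun.
From mathcomp Require Import complex.
Set Implicit Arguments.
Unset Strict Implicit.
Unset Printing Implicit Defensive.
Import Order.TTheory GRing.Theory Num.Theory.
Import numFieldNormedType.Exports.
Local Open Scope classical_set_scope.
Local Open Scope ring_scope.

Section AlphaSH.
Context {R : realType}.

(** C^n is identified with R^(2n) = 'rV[R]_(n + n):
    z_j = x_j + i y_j with x_j = z ord0 (lshift n j), y_j = z ord0 (rshift n j). *)
Definition pt (n : nat) := 'rV[R]_(n + n).
Definition xco n (j : 'I_n) : 'I_(n + n) := lshift n j.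
Definition yco n (j : 'I_n) : 'I_(n + n) := rshift n j.

Definition ev m (p : 'I_m) : 'rV[R]_m := delta_mx ord0 p.
Definition pd m (p : 'I_m) (f : 'rV[R]_m -> R) : 'rV[R]_m -> R :=
  fun x => derive f x (ev p).
Definition pds m (s : seq 'I_m) (f : 'rV[R]_m -> R) : 'rV[R]_m -> R :=
  foldr (fun p g => pd p g) f s.

Definition C1_on m (U : set 'rV[R]_m) (g : 'rV[R]_m -> R) :=
  {in U, continuous g} /\
  forall p, (forall x, U x -> derivable g x (ev p)) /\ {in U, continuous (pd p g)}.
Definition smooth m (f : 'rV[R]_m -> R) :=
  forall s : seq 'I_m, continuous (pds s f) /\
    forall p x, derivable (pds s f) x (ev p).

Definition test_fun m (O : set 'rV[R]_m) (w : 'rV[R]_m -> R) :=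
  smooth w /\ (forall x, 0 <= w x) /\
  exists K : set 'rV[R]_m, compact K /\ K `<=` O /\ forall x, ~ K x -> w x = 0.

Definition cpd m (p : 'I_m) (g : 'rV[R]_m -> R[i]) (x : 'rV[R]_m) : R[i] :=
  Complex (pd p (fun y => complex.Re (g y)) x) (pd p (fun y => complex.Im (g y)) x).
Definition dz n (j : 'I_n) (g : pt n -> R[i]) : pt n -> R[i] :=
  fun x => (cpd (xco j) g x - Complex 0 1 * cpd (yco j) g x) / 2%:R.
Definition dzb n (j : 'I_n) (g : pt n -> R[i]) : pt n -> R[i] :=
  fun x => (cpd (xco j) g x + Complex 0 1 * cpd (yco j) g x) / 2%:R.

(** A (n-1,n-1)-form alpha = sum_{j,k} a_{jk} beta_{jk}, where beta_{jk} is the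
    basis (n-1,n-1)-form dual to i dz_j /\ dzbar_k, i.e.
    i dz_j /\ dzbar_k /\ beta_{lm} = delta_{jl} delta_{km} dV.
    alpha is given by its coefficient matrix a. *)
Definition C1_coeffs_on n (U : set (pt n)) (a : pt n -> 'M[R[i]]_n) :=
  forall j k, C1_on U (fun x => complex.Re (a x j k)) /\
              C1_on U (fun x => complex.Im (a x j k)).
(* alpha real *)
Definition hermitian_on n (U : set (pt n)) (a : pt n -> 'M[R[i]]_n) :=
  forall x, U x -> forall j k, a x k j = conjc (a x j k).
(* alpha /\ i g /\ gbar > 0 for every nonzero (1,0)-covector g *)
Definition posdef_on n (U : set (pt n)) (a : pt n -> 'M[R[i]]_n) :=
  forall x, U x -> forall g : 'I_n -> R[i], (exists j, g j != 0) ->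
    0 < \sum_j \sum_k a x j k * g j * conjc (g k).
(* d alpha = 0, i.e. del alpha = 0 and delbar alpha = 0 *)
Definition dclosed_on n (U : set (pt n)) (a : pt n -> 'M[R[i]]_n) :=
  forall x, U x ->
    (forall k, \sum_j dz j (fun y => a y j k) x = 0) /\
    (forall j, \sum_k dzb k (fun y => a y j k) x = 0).
Definition closed_strictly_positive_form n (U : set (pt n)) (a : pt n -> 'M[R[i]]_n) :=
  open U /\ C1_coeffs_on U a /\ hermitian_on U a /\ posdef_on U a /\ dclosed_on U a.

(** alpha /\ dd^c w = c * (Lop a w) dV with a constant c > 0 *)
Definition Lop n (a : pt n -> 'M[R[i]]_n) (w : pt n -> R) (x : pt n) : R :=
  complex.Re (\sum_j \sum_k a x j k * dz j (dzb k (fun y => Complex (w y) 0)) x).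

(** Lebesgue integral on R^m, as iterated one-dimensional Lebesgue integrals *)
Fixpoint iint (m : nat) : ('rV[R]_m -> \bar R) -> \bar R :=
  match m return ('rV[R]_m -> \bar R) -> \bar R with
  | 0 => fun f => f 0
  | m'.+1 => fun f =>
      (\int[@lebesgue_measure R]_t
         iint (fun v : 'rV[R]_m' => f (row_mx (const_mx t : 'rV[R]_1) v)))%E
  end.
Definition on_set m (A : set 'rV[R]_m) (f : 'rV[R]_m -> \bar R) (x : 'rV[R]_m) : \bar R :=
  if x \in A then f x else 0%E.

Definition borel m (A : set 'rV[R]_m) := <<s [set U : set 'rV[R]_m | open U] >> A.
Definition null_set m (N : set 'rV[R]_m) :=
  exists B, borel B /\ N `<=` B /\ iint (on_set B (fun _ => 1%E)) = 0%E.
Definition L1loc m (O : set 'rV[R]_m) (u : 'rV[R]_m -> \bar R) :=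
  (forall B : set (\bar R), measurable B -> borel (O `&` u @^-1` B)) /\
  forall K, compact K -> K `<=` O -> (iint (on_set K (fun x => `|u x|)) < +oo)%E.

Definition usc_on m (O : set 'rV[R]_m) (u : 'rV[R]_m -> \bar R) :=
  forall x, O x -> forall c : R, (u x < c%:E)%E -> \forall y \near x, (u y < c%:E)%E.
Definition full_near m (A : set 'rV[R]_m) (x0 : 'rV[R]_m) :=
  exists V, nbhs x0 V /\ null_set (V `\` A).
Definition strongly_usc m (O : set 'rV[R]_m) (u : 'rV[R]_m -> \bar R) :=
  usc_on O u /\
  forall x0, O x0 -> forall A, full_near A x0 ->
    u x0 = ereal_inf [set ereal_sup (u @` (V `&` (A `\ x0))) | V in nbhs x0].

Definition alpha_sh n (a : pt n -> 'M[R[i]]_n) (O : set (pt n)) (u : pt n -> \bar R) :=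
  (forall x, O x -> u x = -oo%E) \/
  ((forall x, O x -> (u x < +oo)%E) /\ L1loc O u /\ strongly_usc O u /\
   forall w, test_fun O w ->
     (0 <= iint (on_set O (fun x => u x * (Lop a w x)%:E)))%E).

Definition bounded_domain n (D : set (pt n)) :=
  open D /\ connected D /\ D !=set0 /\ exists M : R, forall z, D z -> `|z| <= M.

Definition alpha_regular n (a : pt n -> 'M[R[i]]_n) (D : set (pt n)) :=
  exists rho, alpha_sh a D rho /\ (forall z, D z -> (rho z < 0)%E) /\
    forall xi, (closure D `\` D) xi -> forall e : R, 0 < e ->
      exists2 d : R, 0 < d & forall z, D z -> `|z - xi| < d -> ((- e)%:E < rho z)%E.

Definition Ucl n (a : pt n -> 'M[R[i]]_n) (E D : set (pt n)) (psi : pt n -> R)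
  (u : pt n -> \bar R) :=
  alpha_sh a D u /\ (forall z, D z -> (u z < 0)%E) /\
  (forall z, E z -> (u z <= (psi z)%:E)%E).
Definition omega n (a : pt n -> 'M[R[i]]_n) (E D : set (pt n)) (psi : pt n -> R)
  (z : pt n) : \bar R :=
  ereal_sup [set u z | u in Ucl a E D psi].
Definition omega_star n (a : pt n -> 'M[R[i]]_n) (E D : set (pt n)) (psi : pt n -> R)
  (z : pt n) : \bar R :=
  ereal_inf [set ereal_sup (omega a E D psi @` (V `&` D)) | V in nbhs z].

End AlphaSH.

(* Main.v *)
Require Import Defs.
From HB Require Import structures.
From mathcomp Require Import all_boot all_order all_algebra.
From mathcomp Require Import all_classical all_reals all_analysis measurable_realfun.
From mathcomp Require Import complex.
Import Order.TTheory GRing.Theory Num.Theory.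
Import numFieldNormedType.Exports.
Local Open Scope classical_set_scope.
Local Open Scope ring_scope.
Lemma muleBr_pos (R : realType) (k : R) (a b : \bar R) : 0 < k ->
  (k%:E * (a - b) = k%:E * a - k%:E * b)%E.
Proof.
move=> k0.
have ky : (k%:E * +oo = +oo)%E by rewrite mulry gtr0_sg // mul1e.
have kNy : (k%:E * -oo = -oo)%E by rewrite mulrNy gtr0_sg // mul1e.
case: a => [a| |]; case: b => [b| |]; rewrite /= ?ky ?kNy //=.
by rewrite -EFinD -!EFinM -EFinD mulrDr mulrN.
Qed.
Import HBNNSimple.
Lemma nnint_scale d (T : measurableType d) (R : realType) (mu : {measure set T -> \bar R})
  (g : T -> \bar R) (k : R) : 0 < k ->
  ereal_sup [set sintegral mu h | h in [set h : {nnsfun T >-> R} | forall x, ((h x)%:E <= k%:E * g x)%E]]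
  = (k%:E * ereal_sup [set sintegral mu h | h in [set h : {nnsfun T >-> R} | forall x, ((h x)%:E <= g x)%E]])%E.
Proof.
move=> k0; rewrite -ereal_sup_pZl //; congr ereal_sup.
apply/seteqP; split => y /=.
- move=> [h hle <-].
  have ki0 : 0 <= k^-1 by rewrite invr_ge0 ltW.
  exists (sintegral mu (scale_nnsfun h ki0)).
    exists (scale_nnsfun h ki0) => // x /=.
    rewrite EFinM -(@lee_pmul2l _ k%:E) ?lte_fin // muleA -EFinM mulfV ?gt_eqF // mul1r.
    exact: hle.
  rewrite sintegralrM muleA -EFinM mulfV ?gt_eqF // mul1e //.
- move=> [s [h hle <-] <-].
  exists (scale_nnsfun h (ltW k0)).
    move=> x /=; rewrite EFinM lee_pmul2l ?lte_fin //.
  by rewrite sintegralrM.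
Qed.
Lemma integral_pZl d (T : measurableType d) (R : realType) (mu : {measure set T -> \bar R})
  (D : set T) (f : T -> \bar R) (k : R) : 0 < k ->
  (\int[mu]_(x in D) (k%:E * f x) = k%:E * \int[mu]_(x in D) f x)%E.
Proof.
move=> k0; rewrite /integral /= erestrict_scale ge0_funeposM ?ge0_funenegM ?ltW //.
by rewrite !nnint_scale // muleBr_pos.
Qed.

Lemma iint_pZl (R : realType) m (f : 'rV[R]_m -> \bar R) (k : R) : 0 < k ->
  iint (fun x => k%:E * f x)%E = (k%:E * iint f)%E.
Proof.
move=> k0; elim: m f => [|m IH] f //=.
under eq_integral => t _ do rewrite IH.
by rewrite integral_pZl.
Qed.

Lemma scale_lty (R : realType) (k : R) (y : \bar R) : 0 < k -> (y < +oo)%E -> (k%:E * y < +oo)%E.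
Proof.
move=> k0; case: y => [r| |] //= _; first by rewrite -EFinM ltry.
by rewrite mulrNy gtr0_sg // mul1e.
Qed.

Lemma alpha_sh_scale (R : realType) n (a : @pt R n -> 'M[R[i]]_n) (O : set (@pt R n))
  (u : @pt R n -> \bar R) (k : R) : 0 < k -> alpha_sh a O u ->
  alpha_sh a O (fun x => k%:E * u x)%E.
Proof.
move=> k0 [Hinf | [Hlt [[Hmeas Hint] [[Husc Hsu] Hw]]]].
  by left => x Ox; rewrite Hinf // mulrNy gtr0_sg // mul1e.
right; split; [|split; [split|split; [split|]]].
- by move=> x Ox; apply: scale_lty => //; exact: Hlt.
- move=> B mB.
  have mg := @measurable_funeM _ _ R setT id k%:E (@measurable_id _ _ setT).
  have := Hmeas _ (mg measurableT B mB).
  congr borel; apply/seteqP; split => x /= [Ox H]; split => //; by case: H.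
- move=> K cK KO.
  rewrite (_ : on_set K _ = fun x => k%:E * on_set K (fun x => `|u x|) x)%E; last first.
    apply/funext => x; rewrite /on_set; case: ifP => _; last by rewrite mule0.
    by rewrite abseM /= gtr0_norm.
  by rewrite iint_pZl //; apply: scale_lty => //; exact: Hint.
- move=> x Ox c.
  rewrite -lte_pdivlMl // -EFinM => /(Husc x Ox).
  by apply: filterS => y; rewrite EFinM lte_pdivlMl.
- move=> x0 Ox0 A fA; rewrite (Hsu x0 Ox0 A fA) -ereal_inf_pZl //; congr ereal_inf.
  rewrite image_comp; apply: eq_imagel => V _ /=.
  by rewrite -ereal_sup_pZl // image_comp.
- move=> w tw.
  rewrite (_ : on_set O _ = fun x => k%:E * on_set O (fun x => u x * (Lop a w x)%:E) x)%E; last first.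
    apply/funext => x; rewrite /on_set; case: ifP => _; last by rewrite mule0.
    by rewrite muleA.
  rewrite iint_pZl // mule_ge0 //; [by rewrite lee_fin ltW | exact: Hw].
Qed.

Lemma omega_scale (R : realType) n (a : @pt R n -> 'M[R[i]]_n) (E D : set (@pt R n))
  (psi1 psi2 : @pt R n -> R) (c : R) : 0 < c ->
  (forall z, E z -> c * psi1 z <= psi2 z) ->
  forall w, (c%:E * omega a E D psi1 w <= omega a E D psi2 w)%E.
Proof.
move=> c0 Hp w; rewrite /omega -ereal_sup_pZl //.
apply: ge_ereal_sup => y [x [u [Hu [Hneg HE]] <-] <-].
apply: ereal_sup_ubound; exists (fun x => c%:E * u x)%E => //.
split; [exact: alpha_sh_scale|split].
- move=> z Dz; have := Hneg z Dz; case: (u z) => [r| |] //=.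
    by rewrite !lte_fin => r0; rewrite pmulr_rlt0.
  by rewrite mulrNy gtr0_sg // mul1e.
- move=> z Ez; apply: (le_trans (y := (c * psi1 z)%:E)); last by rewrite lee_fin Hp.
  by rewrite EFinM lee_pmul2l ?lte_fin //; exact: HE.
Qed.

Lemma omega_star_scale (R : realType) n (a : @pt R n -> 'M[R[i]]_n) (E D : set (@pt R n))
  (psi1 psi2 : @pt R n -> R) (c : R) : 0 < c ->
  (forall z, E z -> c * psi1 z <= psi2 z) ->
  forall z, (c%:E * omega_star a E D psi1 z <= omega_star a E D psi2 z)%E.
Proof.
move=> c0 Hp z; rewrite /omega_star -ereal_inf_pZl //.
apply: le_ereal_inf_tmp => b [V NV <-].
apply: (le_trans (ereal_inf_lbound _)).
  exists (ereal_sup [set omega a E D psi1 x | x in V `&` D]) => //.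
  by exists V.
rewrite -ereal_sup_pZl //; apply: ge_ereal_sup => y [x [w Hw <-] <-].
apply: (le_trans (@omega_scale _ _ a E D _ _ _ c0 Hp w)).
by apply: ereal_sup_ubound; exists w.
Qed.

From mathcomp Require Import lra ring.
Lemma cf (R : realType) m (z e : 'rV[R]_m) : continuous (fun t : R => z + t *: e).
Proof. move=> t; apply: cvgD; first exact: cvg_cst. by apply: cvgZl; exact: cvg_id. Qed.

Lemma ent (R : realType) m (v : 'rV[R]_m) i : `|v ord0 i| <= `|v|.
Proof.
have /mapP[j Hj ->] : `|v ord0 i| \in [seq `|v x.1 x.2| | x : 'I_1 * 'I_m].
  by apply/mapP; exists (ord0, i) => //=; rewrite mem_enum.
by rewrite [leRHS]/Num.norm /= mx_normrE; apply/bigmax_geP; right => /=; exists j.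
Qed.

Lemma bdry_exists (R : realType) n (D : set (@pt R n)) : (0 < n)%N -> bounded_domain D ->
  exists xi, closure D xi /\ ~ D xi.
Proof.
move=> n0 [oD [_ [[z0 Dz0] [M HM]]]].
apply: contrapT => Hno.
have cD : closed D.
  apply/closure_id; apply/seteqP; split; first exact: subset_closure.
  by move=> x cx; apply: contrapT => nDx; apply: Hno; exists x.
pose j : 'I_(n + n) := lshift n (Ordinal n0).
pose e : 'rV[R]_(n + n) := delta_mx ord0 j.
pose f := fun t : R => z0 + t *: e.
pose T := M + `|z0| + 1.
have hz0 := HM z0 Dz0.
have hn0 : 0 <= `|z0| by [].
have T0 : 0 <= T by rewrite /T; lra.
have conn : connected (f @` `[0, T]).
  apply: connected_continuous_connected; first exact: segment_connected.
  by apply: continuous_subspaceT => t; exact: cf.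
have H := conn (f @` `[0, T] `&` D).
have fTD : D (f T).
  have : (f @` `[0, T] `&` D) (f T).
    rewrite H.
    - by exists T => //=; rewrite in_itv /= T0 lexx.
    - exists z0; split => //; exists 0; first by rewrite /= in_itv /= lexx T0.
      by rewrite /f scale0r addr0.
    - by exists D.
    - by exists D.
  by case.
have h2 := HM _ fTD.
have h3 := @ent _ _ (f T) j.
have h1 := @ent _ _ z0 j.
move: h1 h2 h3; rewrite !ler_norml.
have -> : f T ord0 j = z0 ord0 j + T by rewrite /f !mxE eqxx mulr1.
move=> /andP[h1 h1'] h2 /andP[h3 h3']; rewrite /T in h3'; lra.
Qed.

Definition cube (R : realType) m (c : 'rV[R]_m) (r : R) : set 'rV[R]_m :=
  [set v | forall i, `[c ord0 i - r, c ord0 i + r]%classic (v ord0 i)].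

Lemma iint0 (R : realType) m : iint (fun _ : 'rV[R]_m => 0%E) = 0%E.
Proof.
elim: m => [|m IH] //=.
under eq_integral => t _ do rewrite IH.
exact: integral0.
Qed.

Lemma iint_cube (R : realType) m (c : 'rV[R]_m) (r : R) : 0 < r ->
  iint (fun x => if x \in @cube R m c r then +oo else 0)%E = +oo%E.
Proof.
move=> r0; elim: m c => [|m IH] c /=.
  by rewrite (_ : (0 \in @cube R 0 c r) = true) //; apply: mem_set => -[].
pose c' : 'rV[R]_m := \row_j c ord0 (rshift 1 j).
pose I := `[c ord0 (lshift m (@ord0 0)) - r, c ord0 (lshift m (@ord0 0)) + r]%classic.
have key t v : (row_mx (const_mx t : 'rV[R]_1) v \in @cube R m.+1 c r) = (t \in I) && (v \in @cube R m c' r).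
  apply/idP/andP.
    move/set_mem => H; split; apply: mem_set.
    by have := H (lshift m (@ord0 0)); rewrite (@row_mxEl R 1 1 m) mxE.
    by move=> j; have := H (rshift 1 j); rewrite (@row_mxEr R 1 1 m) mxE.
  move=> [/set_mem Ht /set_mem Hv]; apply: mem_set => i.
  case: (@split_ordP 1 m i) => k ->.
    by rewrite (@row_mxEl R 1 1 m) mxE (ord1 k).
  by rewrite (@row_mxEr R 1 1 m); have := Hv k; rewrite mxE.
have inner t : iint (fun v => if row_mx (const_mx t : 'rV[R]_1) v \in @cube R m.+1 c r then +oo else 0)%E
    = (if t \in I then +oo else 0)%E.
  case: (boolP (t \in I)) => tI.
    rewrite (_ : (fun v => _) = (fun v => if v \in @cube R m c' r then +oo else 0)%E); first exact: IH.
    by apply/funext => v; rewrite key tI.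
  rewrite (_ : (fun v => _) = (fun v => 0%E)); first exact: iint0.
  by apply/funext => v; rewrite key (negbTE tI).
under eq_integral => t _ do rewrite inner.
rewrite (_ : (fun t => _) = (cst +oo%E) \_ I); last by apply/funext => t.
rewrite -integral_mkcond integral_cst; last exact: measurable_itv.
have HI := @lebesgue_measure_itv R `[c ord0 (lshift m (@ord0 0)) - r, c ord0 (lshift m (@ord0 0)) + r]. rewrite /= lte_fin ltrD2l gt0_cp ?r0 // in HI. rewrite [X in (_ * X)%E]HI -EFinD mulyr gtr0_sg ?mul1e //; lra.
Qed.

Lemma t1 (R : realType) m (z y : 'rV[R]_m) (e : R) : 0 < e ->
  (forall i, `[z ord0 i - e/2, z ord0 i + e/2]%classic (y ord0 i)) -> ball z e y.
Proof.
move=> e0 H; split => // i j; rewrite (ord1 i); have := H j; rewrite /= in_itv /= => /andP[h1 h2].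
rewrite /ball /=; rewrite ltr_norml; apply/andP; split; lra.
Qed.
Lemma t2 (R : realType) m (D : set 'rV[R]_m) z : open D -> D z -> nbhs z D.
Proof. move=> oD Dz; exact: oD. Qed.
Lemma t3 (R : realType) m (D : set 'rV[R]_m) xi (d : R) : 0 < d -> closure D xi -> exists z, D z /\ `|z - xi| < d.
Proof.
move=> d0 cxi; have := cxi (ball xi d) (nbhsx_ballx _ _ d0).
move=> [z [Dz bz]]; exists z; split => //.
rewrite distrC; move: bz; rewrite -ball_normE /ball_ /=. done.
Qed.

Lemma scale_neg (R : realType) (k : R) (y : \bar R) : 0 < k -> (y < 0)%E -> (k%:E * y < 0)%E.
Proof.
move=> k0; case: y => [r| |] //=.
  by rewrite !lte_fin => r0; rewrite pmulr_rlt0.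
by rewrite mulrNy gtr0_sg // mul1e.
Qed.

Lemma ge0_from_all (R : realType) (x : \bar R) :
  (forall e : R, 0 < e -> ((- e)%:E <= x)%E) -> (0 <= x)%E.
Proof.
case: x => [x| |] // H.
  rewrite lee_fin; apply: contrapT; move/negP; rewrite -ltNge => x0.
  have := H (- x / 2); rewrite lee_fin; lra.
by have := H 1 ltr01.
Qed.

Lemma os_empty (R : realType) (n : nat) (a : @pt R n -> 'M[R[i]]_n) (D E : set (@pt R n))
  (psi : @pt R n -> R) :
  (0 < n)%N -> bounded_domain D -> alpha_regular a D -> E = set0 ->
  forall z, D z -> omega_star a E D psi z = 0%E.
Proof.
move=> n0 bD [rho [shr [rneg rbd]]] E0 z Dz.
have oD : open D by case: bD.
have om_le0 w : D w -> (omega a E D psi w <= 0)%E.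
  move=> Dw; apply: ge_ereal_sup => _ [u [_ [un _]] <-]; exact: ltW (un w Dw).
have om_ge0 w : D w -> rho w <> -oo%E -> (0 <= omega a E D psi w)%E.
  move=> Dw; have := rneg w Dw; case Er: (rho w) => [r| |] // r0 _.
  move: r0; rewrite lte_fin => r0.
  apply: ge0_from_all => e e0.
  have k0 : 0 < e / - r by rewrite divr_gt0 // oppr_gt0.
  apply: ereal_sup_ubound; exists (fun x => (e / - r)%:E * rho x)%E.
    split; [exact: alpha_sh_scale|split].
    - by move=> x Dx; apply: scale_neg => //; exact: rneg.
    - by rewrite E0.
  rewrite Er -EFinM; congr EFin.
  by rewrite invrN mulrN mulNr -mulrA mulVf ?mulr1 // lt_eqF.
have key V : nbhs z V -> exists w, (V `&` D) w /\ rho w <> -oo%E.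
  move=> NV; have NW : nbhs z (V `&` D) by apply: filterI => //; exact: oD.
  apply: contrapT => Hn.
  have allNy w : (V `&` D) w -> rho w = -oo%E.
    by move=> Hw; apply: contrapT => Hr; apply: Hn; exists w.
  case: shr => [Hinf | [_ [[_ Hint] _]]].
    have [xi [cxi nxi]] := @bdry_exists _ _ D n0 bD.
    have [d d0 Hd] := rbd xi (conj cxi nxi) 1 ltr01.
    have [z' [Dz' hz']] := @t3 _ _ D xi d d0 cxi.
    by have := Hd z' Dz' hz'; rewrite Hinf.
  have [e e0 Hb] := (nbhs_ballP z (V `&` D)).1 NW.
  pose K := @cube R (n + n) z (e / 2).
  have KW : K `<=` V `&` D.
    by move=> y Ky; apply: Hb; apply: t1.
  have cK : compact K.
    by apply: (@rV_compact _ _ (fun i => `[z ord0 i - e / 2, z ord0 i + e / 2]%classic)) => i; exact: segment_compact.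
  have := Hint K cK (fun y Ky => (KW y Ky).2).
  rewrite (_ : on_set K _ = fun x => if x \in K then +oo else 0)%E; last first.
    apply/funext => x; rewrite /on_set; case: ifP => // /set_mem Kx.
    by rewrite allNy //; exact: KW.
  by rewrite iint_cube // divr_gt0.
apply/eqP; rewrite eq_le; apply/andP; split.
  apply: ge_ereal_inf; exists (ereal_sup [set omega a E D psi x | x in setT `&` D]).
    by exists setT => //; exact: filterT.
  by apply: ge_ereal_sup => _ [w [_ Dw] <-]; exact: om_le0.
apply: le_ereal_inf_tmp => _ [V NV <-].
have [w [Hw Hr]] := key V NV.
apply: (le_trans (om_ge0 w Hw.2 Hr)).
by apply: ereal_sup_ubound; exists w.
Qed.

Theorem lemma4p3 (R : realType) (n : nat) (U : set (@pt R n))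
  (a : @pt R n -> 'M[R[i]]_n) (D E : set (@pt R n)) (psi : @pt R n -> R) :
  (0 < n)%N ->
  closed_strictly_positive_form U a -> D `<=` U ->
  bounded_domain D -> alpha_regular a D ->
  E `<=` D ->
  (exists M : R, forall w, E w -> `|psi w| <= M) ->
  (ereal_sup [set (psi w)%:E | w in E] < 0)%E ->
  forall z, D z ->
    ((- ereal_inf [set (psi w)%:E | w in E]) * omega_star a E D (fun _ => (-1)%R) z
       <= omega_star a E D psi z)%E /\
    (omega_star a E D psi z
       <= (- ereal_sup [set (psi w)%:E | w in E]) * omega_star a E D (fun _ => (-1)%R) z)%E.
Proof.
move=> n0 _ _ bD reg ED [M0 HM] Hsup z Dz.
case: (pselect (exists w, E w)) => [[w0 Ew0]|NE]; last first.
  have E0 : E = set0 by apply/seteqP; split => // w Ew; apply: NE; exists w.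
  rewrite !os_empty // !mule0; split => //.
set A := psi @` E.
have hlb : has_lbound A.
  by exists (- M0) => _ [w Ew <-]; have := HM w Ew; rewrite ler_norml => /andP[].
have hub : has_ubound A.
  by exists M0 => _ [w Ew <-]; have := HM w Ew; rewrite ler_norml => /andP[].
have A0 : A !=set0 by exists (psi w0), w0.
have SE : [set (psi w)%:E | w in E] = [set x%:E | x in A] by rewrite image_comp.
rewrite SE ereal_inf_EFin // ereal_sup_EFin //.
move: Hsup; rewrite SE ereal_sup_EFin // lte_fin => Hsup.
have Hi w : E w -> inf A <= psi w by move=> Ew; apply: ge_inf => //; exists w.
have Hs w : E w -> psi w <= sup A by move=> Ew; apply: ub_le_sup => //; exists w.
split.
- rewrite -EFinN; apply: omega_star_scale.
    by rewrite oppr_gt0; apply: (le_lt_trans (Hi w0 Ew0)); apply: (le_lt_trans (Hs w0 Ew0)).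
  by move=> w Ew; rewrite mulrN1 opprK; exact: Hi.
- have c0 : 0 < (- sup A)^-1 by rewrite invr_gt0 oppr_gt0.
  have H := @omega_star_scale _ _ a E D psi (fun _ => (-1)%R) _ c0.
  have -> : omega_star a E D psi z =
      ((- sup A)%:E * ((- sup A)^-1%:E * omega_star a E D psi z))%E.
    by rewrite muleA -EFinM mulfV ?mul1e // gt_eqF // oppr_gt0.
  rewrite -EFinN lee_pmul2l ?lte_fin ?oppr_gt0 //; apply: H => w Ew.
  by rewrite mulrC ler_pdivrMr ?oppr_gt0 // mulN1r opprK; exact: Hs.
Qed.
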